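(* Let $\Gamma$ be a discrete subgroup of $E(n)$, and suppose $\dim\Gamma\ge n-1$. Then $\dim\Gamma_T=\dim\Gamma$.
   Context: $E(n)$ denotes the group of isometries of $\mathbb{R}^n$; each $\gamma\in E(n)$ has the form $x\mapsto Ax+a$ with $A\in O(n)$, and $\operatorname{ort}(\gamma)=A$. $E(n)$ has the topology of $O(n)\times\mathbb{R}^n$. $\Gamma_T=\{\gamma\in\Gamma:\operatorname{ort}(\gamma)=\mathrm{id}\}$ is the translation subgroup. For a discrete $H\le E(n)$, a subgroup $H'\le H$ and an affine subspace $V$, $(H',V)$ is a cocompact translation pair of $H$ if $gV=V$ and $g|_V$ is a translation of $V$ for all $g\in H'$, and $V/H'$ is compact; it is a finite index cocompact translation pair if moreover $[H:H']<\infty$. Such pairs always exist and $\dim H:=\dim V$ for any such pair (independent of choice). *)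

(* Defs.v *)
From Stdlib Require Import Reals List.
From mathcomp Require Import all_boot.
Unset Printing Implicit Defensive.
Open Scope R_scope.

Definition vec (n : nat) := 'I_n -> R.
Definition mat (n : nat) := 'I_n -> 'I_n -> R.

Definition sumR {k : nat} (f : 'I_k -> R) : R := foldr Rplus 0 (map f (enum 'I_k)).

Definition mulmv {n : nat} (A : mat n) (x : vec n) : vec n :=
  fun i => sumR (fun j => A i j * x j).
Definition mulmm {n : nat} (A B : mat n) : mat n :=
  fun i j => sumR (fun l => A i l * B l j).
Definition trm {n : nat} (A : mat n) : mat n := fun i j => A j i.
Definition idm (n : nat) : mat n := fun i j => if i == j then 1 else 0.
Definition orthogonal {n : nat} (A : mat n) : Prop := mulmm (trm A) A = idm n.

Definition vadd {n : nat} (x y : vec n) : vec n := fun i => x i + y i.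
Definition vsub {n : nat} (x y : vec n) : vec n := fun i => x i - y i.
Definition vnorm {n : nat} (x : vec n) : R := sqrt (sumR (fun i => x i * x i)).

(* An element (A, a) of E(n) is the isometry x |-> A x + a, with A in O(n). *)
Definition isom (n : nat) := (mat n * vec n)%type.
Definition ort {n : nat} (g : isom n) : mat n := fst g.
Definition in_En {n : nat} (g : isom n) : Prop := orthogonal (fst g).
Definition act {n : nat} (g : isom n) (x : vec n) : vec n := vadd (mulmv (fst g) x) (snd g).
Definition comp {n : nat} (g h : isom n) : isom n :=
  (mulmm (fst g) (fst h), vadd (mulmv (fst g) (snd h)) (snd g)).
Definition inv {n : nat} (g : isom n) : isom n :=
  (trm (fst g), fun i => - mulmv (trm (fst g)) (snd g) i).
Definition iso_id (n : nat) : isom n := (idm n, fun _ => 0).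

Definition is_subgroup {n : nat} (G : isom n -> Prop) : Prop :=
  (forall g, G g -> in_En g) /\ G (iso_id n) /\
  (forall g h, G g -> G h -> G (comp g h)) /\
  (forall g, G g -> G (inv g)).

(* metric inducing the topology of O(n) x R^n (subspace of R^(n*n) x R^n) *)
Definition iso_dist {n : nat} (g h : isom n) : R :=
  sumR (fun i => sumR (fun j => Rabs (fst g i j - fst h i j)))
  + sumR (fun i => Rabs (snd g i - snd h i)).

Definition discrete {n : nat} (G : isom n -> Prop) : Prop :=
  forall g, G g -> exists eps, 0 < eps /\
    forall h, G h -> iso_dist g h < eps -> h = g.

Definition transl_subgroup {n : nat} (G : isom n -> Prop) : isom n -> Prop :=
  fun g => G g /\ ort g = idm n.

Definition lin_comb {n k : nat} (w : 'I_k -> vec n) (t : 'I_k -> R) : vec n :=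
  fun i => sumR (fun j => t j * w j i).
Definition affine_subspace_of_dim {n : nat} (V : vec n -> Prop) (k : nat) : Prop :=
  exists (p : vec n) (w : 'I_k -> vec n),
    (forall t, lin_comb w t = (fun _ => 0) -> forall j, t j = 0) /\
    (forall x, V x <-> exists t, x = vadd p (lin_comb w t)).
Definition affine_subspace {n : nat} (V : vec n -> Prop) : Prop :=
  exists k, affine_subspace_of_dim V k.

(* V / H' compact: there is a compact (closed ball) set K with V = H' K *)
Definition cocompact_quotient {n : nat} (H' : isom n -> Prop) (V : vec n -> Prop) : Prop :=
  exists (x0 : vec n) (r : R), forall x, V x ->
    exists g, H' g /\ V (act g x) /\ vnorm (vsub (act g x) x0) <= r.

Definition cocompact_translation_pair {n : nat} (H H' : isom n -> Prop)
    (V : vec n -> Prop) : Prop :=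
  is_subgroup H' /\ (forall g, H' g -> H g) /\ affine_subspace V /\
  (forall g, H' g ->
     (forall x, V x -> V (act g x)) /\
     (forall y, V y -> exists x, V x /\ act g x = y) /\
     (exists v : vec n, forall x, V x -> act g x = vadd x v)) /\
  cocompact_quotient H' V.

Definition finite_index {n : nat} (H H' : isom n -> Prop) : Prop :=
  exists l : list (isom n), (forall g, In g l -> H g) /\
    forall h, H h -> exists g, In g l /\ exists h', H' h' /\ h = comp g h'.

(* "dim H = k": some finite index cocompact translation pair (H', V) of H has dim V = k
   (dim H is independent of the choice of pair). *)
Definition has_dim {n : nat} (H : isom n -> Prop) (k : nat) : Prop :=
  exists (H' : isom n -> Prop) (V : vec n -> Prop),
    cocompact_translation_pair H H' V /\ finite_index H H' /\ affine_subspace_of_dim V k.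

(* Main.v *)
Require Import Defs.
From Stdlib Require Import Reals List.
From mathcomp Require Import all_boot.
From Stdlib Require Import Classical FunctionalExtensionality Lra Psatz.
From mathcomp Require Import all_algebra.
From mathcomp Require Import Rstruct.
Import GRing.Theory Num.Theory.

Section StdR.
Local Open Scope R_scope.
Lemma sumR_le k (f g : 'I_k -> R) : (forall i, f i <= g i) -> sumR f <= sumR g.
Proof.
move=> h; rewrite /sumR; elim: (enum 'I_k) => [|a l IH] /=; first lra.
by apply: Rplus_le_compat.
Qed.
Lemma sumR_add k (f g : 'I_k -> R) : sumR (fun i => f i + g i) = sumR f + sumR g.
Proof. rewrite /sumR; elim: (enum 'I_k) => [|a l IH] /=; [lra| rewrite IH; ring]. Qed.
Lemma sumR_scal k c (f : 'I_k -> R) : sumR (fun i => c * f i) = c * sumR f.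
Proof. rewrite /sumR; elim: (enum 'I_k) => [|a l IH] /=; [ring| rewrite IH; ring]. Qed.
Definition sumsq {n} (x : vec n) := sumR (fun i => x i * x i).
Lemma sumsq_ge0 n (x : vec n) : 0 <= sumsq x.
Proof.
have := sumR_le _ (fun _ => 0) (fun i => x i * x i) (fun i => Rle_0_sqr (x i)).
rewrite /sumsq; suff -> : sumR (fun _ : 'I_n => 0) = 0 by [].
rewrite /sumR; elim: (enum 'I_n) => [|a l IH] //=; rewrite IH; ring.
Qed.
Lemma sumsq_add n (a b : vec n) : sumsq (vadd a b) <= 2 * sumsq a + 2 * sumsq b.
Proof.
rewrite /sumsq -!sumR_scal -sumR_add; apply: sumR_le => i; rewrite /vadd.
have := Rle_0_sqr (a i - b i); rewrite /Rsqr => h. lra.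
Qed.
End StdR.

Section StdR2.
Local Open Scope R_scope.
Definition bnd (r c : R) := sqrt (2 * r * r + 2 * c).
Lemma bnd_ge s r c : 0 <= s -> 0 <= c -> sqrt s <= r -> r <= bnd r c.
Proof.
move=> s0 c0 h; have r0 : 0 <= r by apply: Rle_trans (sqrt_pos s) h.
rewrite -{1}(sqrt_square r r0) /bnd; apply: sqrt_le_1_alt; nra.
Qed.
Lemma bnd_le s t r c : 0 <= s -> 0 <= c -> sqrt s <= r -> t <= 2 * s + 2 * c -> sqrt t <= bnd r c.
Proof.
move=> s0 c0 h ht; have r0 : 0 <= r by apply: Rle_trans (sqrt_pos s) h.
have ss : s <= r * r.
  rewrite -(sqrt_sqrt s s0); apply: Rmult_le_compat => //; apply: sqrt_pos.
rewrite /bnd; apply: sqrt_le_1_alt; nra.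
Qed.
End StdR2.
Local Open Scope ring_scope.

Definition dotv {n} (x y : 'cV[R]_n) : R := (x^T *m y) 0 0.

Lemma dep n m (f : 'I_m -> 'cV[R]_n) : (n < m)%N ->
  exists c : 'I_m -> R, (exists i, c i != 0) /\ \sum_i c i *: f i = 0.
Proof.
move=> hnm.
pose A : 'M[R]_(m, n) := \matrix_(i, j) f i j 0.
have hK : kermx A != 0.
  rewrite -mxrank_eq0 mxrank_ker; have := rank_leq_col A.
  by rewrite -lt0n subn_gt0 => h; apply: leq_ltn_trans h hnm.
have [i [j hij]] : exists i j, kermx A i j != 0.
  apply: NNPP => hn; apply: (negP hK); apply/eqP/matrixP => i j; rewrite [RHS]mxE.
  apply: NNPP => h; apply: hn; exists i, j; apply/negP => /eqP; exact: h.
exists (fun l => kermx A i l); split; first by exists j.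
apply/matrixP => l z; rewrite summxE [RHS]mxE (ord1 z).
transitivity ((kermx A *m A) i l); last by rewrite mulmx_ker mxE.
rewrite mxE; apply: eq_bigr => p _; by rewrite !mxE.
Qed.

Lemma dotvC n (x y : 'cV[R]_n) : dotv x y = dotv y x.
Proof. rewrite /dotv !mxE; apply: eq_bigr => i _; by rewrite !mxE mulrC. Qed.
Lemma dotvDr n (x y z : 'cV[R]_n) : dotv x (y + z) = dotv x y + dotv x z.
Proof. by rewrite /dotv mulmxDr mxE. Qed.
Lemma dotvZr n a (x y : 'cV[R]_n) : dotv x (a *: y) = a * dotv x y.
Proof. by rewrite /dotv -scalemxAr mxE. Qed.
Lemma dotvNr n (x y : 'cV[R]_n) : dotv x (- y) = - dotv x y.
Proof. by rewrite /dotv mulmxN mxE. Qed.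
Lemma dotvBr n (x y z : 'cV[R]_n) : dotv x (y - z) = dotv x y - dotv x z.
Proof. by rewrite dotvDr dotvNr. Qed.
Lemma dotvDl n (x y z : 'cV[R]_n) : dotv (y + z) x = dotv y x + dotv z x.
Proof. by rewrite dotvC dotvDr !(dotvC _ x). Qed.
Lemma dotvZl n a (x y : 'cV[R]_n) : dotv (a *: y) x = a * dotv y x.
Proof. by rewrite dotvC dotvZr dotvC. Qed.
Lemma dotvBl n (x y z : 'cV[R]_n) : dotv (y - z) x = dotv y x - dotv z x.
Proof. by rewrite dotvC dotvBr !(dotvC _ x). Qed.
Lemma dotv_sumr n k (x : 'cV[R]_n) (F : 'I_k -> 'cV[R]_n) :
  dotv x (\sum_j F j) = \sum_j dotv x (F j).
Proof.
elim/big_ind2: _ => //; first by rewrite /dotv mulmx0 mxE.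
by move=> a b c d <- <-; rewrite dotvDr.
Qed.
Lemma dotv_suml n k (x : 'cV[R]_n) (F : 'I_k -> 'cV[R]_n) :
  dotv (\sum_j F j) x = \sum_j dotv (F j) x.
Proof. rewrite dotvC dotv_sumr; apply: eq_bigr => j _; exact: dotvC. Qed.
Lemma dotv_ge0 n (x : 'cV[R]_n) : 0 <= dotv x x.
Proof. rewrite /dotv mxE; apply: sumr_ge0 => i _; rewrite !mxE -expr2; exact: sqr_ge0. Qed.
Lemma dotv_eq0 n (x : 'cV[R]_n) : dotv x x = 0 -> x = 0.
Proof.
rewrite /dotv mxE => /eqP; rewrite psumr_eq0; last by move=> i _; rewrite !mxE -expr2 sqr_ge0.
move/allP => h; apply/matrixP => i j; rewrite (ord1 j) mxE.
have := h i (mem_index_enum i); rewrite !mxE mulf_eq0 orbb => /eqP //.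
Qed.
Lemma orth_dot n (M : 'M[R]_n) x y : M^T *m M = 1%:M -> dotv (M *m x) (M *m y) = dotv x y.
Proof. by move=> h; rewrite /dotv trmx_mul -mulmxA (mulmxA M^T) h mul1mx. Qed.
Lemma dotv0r n (x : 'cV[R]_n) : dotv x 0 = 0.
Proof. by rewrite /dotv mulmx0 mxE. Qed.


Lemma sumR_big k (f : 'I_k -> R) : sumR f = \sum_(i < k) f i.
Proof.
rewrite /sumR unlock /reducebig /index_enum.
rewrite -enumT. by elim: (enum 'I_k) => //= a l ->.
Qed.

Definition mx {n} (A : mat n) : 'M[R]_n := \matrix_(i, j) A i j.
Definition cv {n} (x : vec n) : 'cV[R]_n := \col_i x i.

Lemma mx_inj n (A B : mat n) : mx A = mx B -> A = B.
Proof.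
move=> H; apply: functional_extensionality => i; apply: functional_extensionality => j.
by have := congr1 (fun M : 'M[R]_n => M i j) H; rewrite !mxE.
Qed.
Lemma cv_inj n (x y : vec n) : cv x = cv y -> x = y.
Proof.
move=> H; apply: functional_extensionality => i.
by have := congr1 (fun M : 'cV[R]_n => M i 0) H; rewrite !mxE.
Qed.

Lemma cv_mulmv n A (x : vec n) : cv (mulmv A x) = mx A *m cv x.
Proof. apply/matrixP => i j; rewrite !mxE /mulmv sumR_big; apply: eq_bigr => l _; by rewrite !mxE. Qed.
Lemma mx_mulmm n (A B : mat n) : mx (mulmm A B) = mx A *m mx B.
Proof. apply/matrixP => i j; rewrite !mxE /mulmv /mulmm sumR_big; apply: eq_bigr => l _; by rewrite !mxE. Qed.
Lemma mx_trm n (A : mat n) : mx (trm A) = (mx A)^T.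
Proof. apply/matrixP => i j; by rewrite !mxE. Qed.
Lemma mx_idm n : mx (idm n) = 1%:M.
Proof. apply/matrixP => i j; rewrite !mxE /idm; by case: (i == j). Qed.
Lemma cv_vadd n (x y : vec n) : cv (vadd x y) = cv x + cv y.
Proof. apply/matrixP => i j; by rewrite !mxE. Qed.
Lemma cv_vsub n (x y : vec n) : cv (vsub x y) = cv x - cv y.
Proof. apply/matrixP => i j; by rewrite !mxE. Qed.
Lemma cv_zero n : cv (fun _ : 'I_n => 0%R) = 0.
Proof. apply/matrixP => i j; by rewrite !mxE. Qed.
Lemma cv_lin_comb n k (w : 'I_k -> vec n) t : cv (lin_comb w t) = \sum_j t j *: cv (w j).
Proof. apply/matrixP => i j; rewrite !mxE /lin_comb sumR_big summxE; apply: eq_bigr => l _; by rewrite !mxE. Qed.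
Lemma orthE n (A : mat n) : Defs.orthogonal A <-> (mx A)^T *m mx A = 1%:M.
Proof. rewrite /Defs.orthogonal -mx_trm -mx_mulmm -mx_idm; split; [by move->| exact: mx_inj]. Qed.

Lemma sumsqE n (x : vec n) : sumR (fun i => x i * x i)%R = dotv (cv x) (cv x).
Proof. rewrite /dotv !mxE sumR_big; apply: eq_bigr => l _; by rewrite !mxE. Qed.


Section Core.
Variables (n k : nat) (w : 'I_k -> 'cV[R]_n).
Hypothesis indep : forall t : 'I_k -> R, \sum_j t j *: w j = 0 -> forall j, t j = 0.
Hypothesis hk : (n <= k.+1)%N.

Definition perp (d : 'cV[R]_n) := forall j, dotv d (w j) = 0.

Lemma span_lem {d : 'cV[R]_n} : d != 0 -> perp d -> forall y : 'cV[R]_n, exists t s, y = \sum_j t j *: w j + s *: d.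
Proof.
move=> dn0 pd y.
have dd0 : dotv d d != 0 by apply: contra dn0 => /eqP /dotv_eq0 ->.
pose f (i : 'I_(k + 2)) := match split i with inl j => w j | inr b => if val b == 0%N then d else y end.
have hlt : (n < k + 2)%N by rewrite addn2.
have [c [[i ci] hc]] := dep _ _ f hlt.
pose t j := c (lshift 2 j).
pose s := c (rshift k (ord0 : 'I_2)).
pose r := c (rshift k (lift ord0 (ord0 : 'I_1))).
have E : \sum_j t j *: w j + s *: d + r *: y = 0.
  transitivity (\sum_i c i *: f i); last exact: hc.
  rewrite big_split_ord /= big_ord_recl big_ord_recl big_ord0 addr0 addrA.
  congr (_ + _ + _).
  - apply: eq_bigr => j _; by rewrite /f /t (unsplitK (inl j) : split (lshift 2 j) = inl j).
  - by rewrite /f /s (unsplitK (inr ord0) : split (rshift k ord0) = inr ord0).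
  - by rewrite /f /r (unsplitK (inr _) : split (rshift k (lift ord0 ord0)) = inr (lift ord0 (ord0 : 'I_1))).
have [r0|rn0] := eqVneq r 0.
  exfalso.
  move: E; rewrite r0 scale0r addr0 => E.
  have s0 : s = 0.
    have := congr1 (dotv d) E.
    rewrite dotvDr dotv_sumr big1; last by move=> j _; rewrite dotvZr pd mulr0.
    rewrite add0r dotvZr dotv0r => /eqP; rewrite mulf_eq0 (negPf dd0) orbF => /eqP.
    done.
  move: E; rewrite s0 scale0r addr0 => /indep t0.
  move: ci; rewrite -(splitK i); case: (split i) => [j|b].
    by rewrite -[c _]/(t j) t0 eqxx.
  case: b => [[|[|b]] hb] //=.
  - rewrite (_ : Ordinal hb = ord0); last exact: val_inj.
    by rewrite -[c _]/s s0 eqxx.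
  - rewrite (_ : Ordinal hb = lift ord0 ord0); last exact: val_inj.
    by rewrite -[c _]/r r0 eqxx.
exists (fun j => - (r^-1 * t j)), (- (r^-1 * s)).
have ry : r *: y = - (\sum_j t j *: w j + s *: d) by apply/eqP; rewrite -addr_eq0 addrC E.
rewrite -[y](scalerK rn0) ry scalerN scalerDr scaler_sumr opprD -sumrN.
congr (_ + _); first apply: eq_bigr => j _.
all: by rewrite scalerA scaleNr.
Qed.

Lemma mx_ext (A B : 'M[R]_n) : (forall y : 'cV[R]_n, A *m y = B *m y) -> A = B.
Proof.
move=> H; apply/matrixP => i j.
have := congr1 (fun v : 'cV[R]_n => v i 0) (H (delta_mx j 0)).
by rewrite -!colE !mxE.
Qed.

Lemma mulmx_lin (M : 'M[R]_n) t (s : R) (d : 'cV[R]_n) :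
  M *m (\sum_j t j *: w j + s *: d) = \sum_j t j *: (M *m w j) + s *: (M *m d).
Proof.
rewrite mulmxDr mulmx_sumr -scalemxAr; congr (_ + _); apply: eq_bigr => j _.
by rewrite -scalemxAr.
Qed.

Lemma perp_lem {d z : 'cV[R]_n} : d != 0 -> perp d -> perp z -> exists s, z = s *: d.
Proof.
move=> dn0 pd pz.
have [t [s E]] := span_lem dn0 pd z.
exists s.
set u := \sum_j t j *: w j in E.
have pu : perp u.
  move=> j; have -> : u = z - s *: d by rewrite E addrK.
  by rewrite dotvBl dotvZl pz pd mulr0 subr0.
have : dotv u u = 0.
  rewrite {1}/u dotv_suml big1 // => j _.
  by rewrite dotvZl dotvC pu mulr0.
by move/dotv_eq0; rewrite E => ->; rewrite add0r.
Qed.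

Lemma fix_all {M : 'M[R]_n} {d : 'cV[R]_n} : d != 0 -> perp d ->
  (forall j, M *m w j = w j) -> M *m d = d -> M = 1%:M.
Proof.
move=> dn0 pd fw fd; apply: mx_ext => y; rewrite mul1mx.
have [t [s ->]] := span_lem dn0 pd y.
rewrite mulmx_lin fd; congr (_ + _); apply: eq_bigr => j _; by rewrite fw.
Qed.

Lemma refl_lem {M : 'M[R]_n} : M^T *m M = 1%:M -> (forall j, M *m w j = w j) ->
  M != 1%:M -> exists d, [/\ d != 0, perp d & M *m d = - d].
Proof.
move=> oM fw Mn1.
have [x hx] : exists x : 'cV[R]_n, M *m x != x.
  apply: NNPP => hn; apply: (negP Mn1); apply/eqP; apply: mx_ext => y.
  rewrite mul1mx; apply/eqP; apply: NNPP => h; apply: hn; exists y; exact/negP.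
set d := M *m x - x.
have dn0 : d != 0 by rewrite subr_eq0.
have pd : perp d.
  move=> j; rewrite /d dotvBl -{1}(fw j) orth_dot // subrr //.
have pMd : perp (M *m d) by move=> j; rewrite -{1}(fw j) orth_dot.
have [s Es] := perp_lem dn0 pd pMd.
exists d; split => //.
have hs : s ^+ 2 = 1.
  have := orth_dot _ _ d d oM; rewrite Es dotvZl dotvZr mulrA -expr2 => h.
  have dd0 : dotv d d != 0 by apply: contra dn0 => /eqP /dotv_eq0 ->.
  by apply: (mulIf dd0); rewrite h mul1r.
move/eqP: hs; rewrite sqrf_eq1 => /orP [/eqP s1|/eqP s1].
  by move: Mn1; rewrite (fix_all dn0 pd fw) ?eqxx // Es s1 scale1r.
by rewrite Es s1 scaleN1r.
Qed.

Lemma core (M1 M2 : 'M[R]_n) : M1^T *m M1 = 1%:M -> M2^T *m M2 = 1%:M ->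
  (forall j, M1 *m w j = w j) -> (forall j, M2 *m w j = w j) ->
  M1 != 1%:M -> M2 != 1%:M -> M1 = M2.
Proof.
move=> o1 o2 f1 f2 n1 n2.
have [d1 [d1n0 pd1 E1]] := refl_lem o1 f1 n1.
have [d2 [d2n0 pd2 E2]] := refl_lem o2 f2 n2.
have [s Es] := perp_lem d2n0 pd2 pd1.
have E2' : M2 *m d1 = - d1 by rewrite Es -scalemxAr E2 scalerN.
apply: mx_ext => y.
have [t [s' ->]] := span_lem d1n0 pd1 y.
rewrite !mulmx_lin E1 E2'; congr (_ + _); apply: eq_bigr => j _; by rewrite f1 f2.
Qed.
End Core.




Lemma zaux (V : zmodType) (X Y Z : V) : X + Y + Z - (X + Z) = Y.
Proof. by apply/eqP; rewrite subr_eq addrAC addrC. Qed.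

Lemma act_cv n (g : isom n) x : cv (act g x) = mx g.1 *m cv x + cv g.2.
Proof. by rewrite /act cv_vadd cv_mulmv. Qed.
Lemma comp_fst n (g h : isom n) : mx (Defs.comp g h).1 = mx g.1 *m mx h.1.
Proof. by rewrite /= mx_mulmm. Qed.
Lemma comp_snd n (g h : isom n) : cv (Defs.comp g h).2 = mx g.1 *m cv h.2 + cv g.2.
Proof. by rewrite /= cv_vadd cv_mulmv. Qed.
Lemma inv_fst n (g : isom n) : mx (Defs.inv g).1 = (mx g.1)^T.
Proof. by rewrite /= mx_trm. Qed.
Lemma inv_snd n (g : isom n) : cv (Defs.inv g).2 = - ((mx g.1)^T *m cv g.2).
Proof.
rewrite -mx_trm -cv_mulmv; apply/matrixP => i j; by rewrite !mxE.
Qed.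
Lemma iso_ext n (g h : isom n) : mx g.1 = mx h.1 -> cv g.2 = cv h.2 -> g = h.
Proof. case: g => A a; case: h => B b /= /mx_inj -> /cv_inj -> //. Qed.
Lemma inEnE n (g : isom n) : in_En g <-> (mx g.1)^T *m mx g.1 = 1%:M.
Proof. exact: orthE. Qed.
Lemma ortE n (g : isom n) : ort g = idm n <-> mx g.1 = 1%:M.
Proof. rewrite /ort -mx_idm; split; [by move->| exact: mx_inj]. Qed.

Lemma act_comp n (a b : isom n) x : act (Defs.comp a b) x = act a (act b x).
Proof.
apply: cv_inj; rewrite !act_cv comp_fst mulmxDr !mulmxA addrA //.
Qed.
Lemma comp_assoc n (a b c : isom n) : Defs.comp (Defs.comp a b) c = Defs.comp a (Defs.comp b c).
Proof.
apply: iso_ext; first by rewrite !comp_fst mulmxA.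
rewrite /= !cv_vadd !cv_mulmv !mx_mulmm cv_vadd cv_mulmv mulmxDr !mulmxA addrA //.
Qed.
Lemma comp_inv n (h : isom n) : in_En (Defs.inv h) -> Defs.comp h (Defs.inv h) = iso_id n.
Proof.
move/inEnE; rewrite inv_fst trmxK => hh.
apply: iso_ext; first by rewrite comp_fst inv_fst hh /= mx_idm.
rewrite comp_snd inv_snd mulmxN mulmxA hh mul1mx addNr.
by rewrite /= cv_zero.
Qed.
Lemma comp_id n (h : isom n) : Defs.comp (iso_id n) h = h.
Proof.
apply: iso_ext; first by rewrite comp_fst /= mx_idm mul1mx.
by rewrite comp_snd /= mx_idm mul1mx cv_zero addr0.
Qed.

Lemma isom_sumsq n (g : isom n) y z : in_En g ->
  sumsq (vsub (act g y) (act g z)) = sumsq (vsub y z).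
Proof.
move/inEnE => o; rewrite /sumsq !sumsqE cv_vsub !act_cv.
rewrite opprD addrACA subrr addr0 -mulmxBr -cv_vsub; exact: (orth_dot _ _ _ _ o).
Qed.

Lemma filter_ex (A : Type) (P : A -> Prop) (l : list A) :
  exists l', (forall x, In x l' -> P x) /\ (forall x, In x l -> P x -> In x l').
Proof.
elim: l => [|a l [l' [h1 h2]]]; first by exists nil; split.
case: (classic (P a)) => Pa.
- exists (a :: l'); split.
  + move=> x /= [<-|]; [done| exact: h1].
  + move=> x /= [<-|hx] Px; [by left| right; exact: h2].
- exists l'; split => // x /= [<-|hx] Px; [done| exact: h2].
Qed.



Theorem mainTheorem11 (n : nat) (G : isom n -> Prop) :
  is_subgroup G -> discrete G ->
  forall k : nat, has_dim G k -> (n <= k.+1)%N -> has_dim (transl_subgroup G) k.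
Proof.
move=> HG _ k [H' [V [[HS [HsubG [Haff [Hact Hcoc]]]] [Hfin HV]]]] hk.
have HV' := HV.
case: HV' => p [w [Hind HVx]].
have [HSen [HSid [HScomp HSinv]]] := HS.
have [HGen [HGid [HGcomp HGinv]]] := HG.
have Vp : V p.
  apply/HVx; exists (fun _ => 0%R); apply: cv_inj.
  rewrite cv_vadd cv_lin_comb big1 ?addr0 // => j _; by rewrite scale0r.
have Vpw : forall j, V (vadd p (w j)).
  move=> j; apply/HVx; exists (fun i => if i == j then 1%R else 0%R); apply: cv_inj.
  rewrite !cv_vadd cv_lin_comb (bigD1 j) //= eqxx scale1r big1 ?addr0 // => i /negPf ->.
  by rewrite scale0r.
have Hfix : forall g, H' g -> forall j, mx g.1 *m cv (w j) = cv (w j).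
  move=> g Hg j; have [_ [_ [v Hv]]] := Hact g Hg.
  have E1 := congr1 cv (Hv _ Vp); have E2 := congr1 cv (Hv _ (Vpw j)).
  rewrite /act !cv_vadd !cv_mulmv in E1 E2; rewrite ?cv_vadd mulmxDr in E2.
  by rewrite -(zaux _ (mx g.1 *m cv p) (mx g.1 *m cv (w j)) (cv g.2)) E2 E1 zaux.
have indep : forall t : 'I_k -> R, (\sum_j t j *: cv (w j) = 0)%R -> forall j, t j = 0%R.
  move=> t ht; apply: Hind; apply: cv_inj; by rewrite cv_lin_comb cv_zero.
have [h0 [Hh0 Key]] : exists h0, H' h0 /\ forall g, H' g ->
    ort g = idm n \/ ort (Defs.comp (Defs.inv h0) g) = idm n.
  case: (classic (exists g0, H' g0 /\ ort g0 <> idm n)) => [[g0 [Hg0 ng0]]|hn].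
  - exists g0; split => // g Hg.
    case: (classic (ort g = idm n)) => [|ng]; [by left| right].
    have e : mx g0.1 = mx g.1.
      apply: (@core n k (fun j => cv (w j)) indep hk).
      + exact/inEnE/HSen.
      + exact/inEnE/HSen.
      + exact: Hfix.
      + exact: Hfix.
      + apply/eqP => e; apply: ng0; exact/ortE.
      + apply/eqP => e; apply: ng; exact/ortE.
    apply/ortE; rewrite comp_fst inv_fst e; exact/inEnE/HSen.
  - exists (iso_id n); split => // g Hg; left; apply: NNPP => ng; apply: hn; by exists g.
pose H'' := fun g => H' g /\ ort g = idm n.
exists H'', V; split; [|split] => //.
- split.
    split; first by move=> g [Hg _]; exact: HSen.
    split; first by split.
    split.
      move=> g h [Hg og] [Hh oh]; split; first exact: HScomp.
      apply/ortE; rewrite comp_fst; move/ortE: og => ->; move/ortE: oh => ->; by rewrite mulmx1.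
    move=> g [Hg og]; split; first exact: HSinv.
    apply/ortE; rewrite inv_fst; move/ortE: og => ->; by rewrite trmx1.
  split; first by move=> g [Hg og]; split; [exact: HsubG| exact og].
  split; first exact Haff.
  split; first by move=> g [Hg _]; exact: Hact.
  case: Hcoc => x0 [r Hr].
  pose c := sumsq (vsub (act (Defs.inv h0) x0) x0).
  have c0 : Rle 0 c by apply: sumsq_ge0.
  exists x0, (bnd r c) => x Vx.
  have [g [Hg [Vgx Hb]]] := Hr x Vx.
  case: (Key g Hg) => og.
  + exists g; split; first by split.
    split => //; apply: (Rle_trans _ _ _ Hb); apply: (bnd_ge _ _ _ _ c0 Hb); exact: sumsq_ge0.
  + exists (Defs.comp (Defs.inv h0) g); split.
      split => //; apply: HScomp => //; exact: HSinv.
    rewrite act_comp; split; first by apply: (Hact _ (HSinv _ Hh0)).1.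
    set y := act g x.
    have -> : vsub (act (Defs.inv h0) y) x0 =
      vadd (vsub (act (Defs.inv h0) y) (act (Defs.inv h0) x0)) (vsub (act (Defs.inv h0) x0) x0).
      apply: functional_extensionality => i; rewrite /vadd /vsub; ring.
    apply: (bnd_le _ _ _ _ (sumsq_ge0 _ _) c0 Hb).
    rewrite -(isom_sumsq _ (Defs.inv h0) y x0); first exact: sumsq_add.
    exact: HSen (HSinv _ Hh0).
- case: Hfin => l [Hl1 Hl2].
  have [l' [Hl'1 Hl'2]] := filter_ex _ (transl_subgroup G) (l ++ map (fun g => Defs.comp g h0) l).
  exists l'; split => // h [Gh oh].
  have [g [Ing [h' [Hh' Eh]]]] := Hl2 h Gh.
  suff [g' [Ing' [h'' [[Hh'' oh''] Eh']]]] : exists g', In g' (l ++ map (fun g => Defs.comp g h0) l) /\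
      exists h'', H'' h'' /\ h = Defs.comp g' h''.
    exists g'; split; last by exists h''; split.
    apply: Hl'2 => //; split.
      case: (in_app_or _ _ _ Ing') => [|/in_map_iff [g1 [<- Ing1]]]; first exact: Hl1.
      apply: HGcomp; [exact: Hl1| exact: HsubG].
    apply/ortE; move: oh; rewrite Eh' => /ortE; rewrite comp_fst.
    by move/ortE: oh'' => ->; rewrite mulmx1.
  case: (Key h' Hh') => oh'.
  + exists g; split; first by apply: in_or_app; left.
    by exists h'; split.
  + exists (Defs.comp g h0); split.
      by apply: in_or_app; right; apply: (in_map (fun g => Defs.comp g h0)).
    exists (Defs.comp (Defs.inv h0) h'); split.
      split => //; apply: HScomp => //; exact: HSinv.
    rewrite Eh comp_assoc -(comp_assoc _ h0) comp_inv ?comp_id //.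
    exact: HSen (HSinv _ Hh0).
Qed.
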